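(* Consider the Variance-shifting Procedure described in the context, and suppose that in iteration $k$ the procedure reaches Step 2 (i.e. $\mathrm{Reroute}(\mathcal{A}_{k-1},\tau)$ was feasible with optimal solution $(\bar p^k,\bar f^k,\bar\theta^k)$). Let $(\bar f,\mathcal{A})$ be an arbitrary compatible pair. Then there exists $0<\gamma\le 1$ such that for all $0\le t\le\gamma$, the pair $$\bigl((1-t)\bar f^k+t\bar f,\;(1-t)\mathcal{A}_{k-1}+t\mathcal{A}\bigr)$$ is compatible.
   Context: Network (DC model): bus set $\mathcal{B}$, $n=|\mathcal{B}|$; line set $\mathcal{E}$, $m=|\mathcal{E}|$; each line $ij$ has susceptance $b_{ij}>0$ and limit $f^{\max}_{ij}>0$. $B$ is the $n\times n$ bus susceptance matrix; $\hat B$ is $B$ with last row and column removed (assumed invertible); $\breve B=\begin{pmatrix}\hat B^{-1}&0\\0&0\end{pmatrix}$ with $i$-th row $\breve B_i$; $\pi_{ij}=\breve B_i^T-\breve B_j^T$. $\mathcal{G}\subseteq\mathcal{B}$ is the set of generator buses, with limits $p_i^{\min}\le p_i^{\max}$ and costs $c_i(p)=c_{i0}p^2+c_{i1}p+c_{i2}$, $c_{i0}\ge 0$. $d\in\mathbb{R}^n$ are loads, $\mu\in\mathbb{R}^n$ mean stochastic injections, $\omega$ a zero-mean random vector with covariance $\Omega$. $\mathcal{K}$ is a given convex set of $n\times n$ participation matrices $\mathcal{A}$ (with rows $\mathcal{A}_i$). Safety parameters $\nu_{ij}\ge0$ (lines) and $\nu_i\ge0$ (generators) are given. For a matrix $\mathcal{A}$,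 $\mathbf{V}(\mathcal{A})\in\mathbb{R}^m$ has entries $\mathbf{V}(\mathcal{A})_{ij}=b_{ij}^2\pi_{ij}^T(I-\mathcal{A})\Omega(I-\mathcal{A}^T)\pi_{ij}$ (line flow variances). Compatibility: a pair $(\bar f,\mathcal{A})$ with $\bar f\in\mathbb{R}^m$ is compatible if $\mathcal{A}\in\mathcal{K}$ and there exist $\bar p\in\mathbb{R}^n$ (with $\bar p_i=0$ for $i\notin\mathcal{G}$) and $\bar\theta\in\mathbb{R}^n$ with $B\bar\theta=\bar p+\mu-d$; $\bar f_{ij}=b_{ij}(\bar\theta_i-\bar\theta_j)$ and $|\bar f_{ij}|+\nu_{ij}\sqrt{\mathbf{V}(\mathcal{A})_{ij}}\le f^{\max}_{ij}$ for all $ij\in\mathcal{E}$; and $p_i^{\min}+\nu_i\sqrt{\mathcal{A}_i^T\Omega\mathcal{A}_i}\le\bar p_i\le p_i^{\max}-\nu_i\sqrt{\mathcal{A}_i^T\Omega\mathcal{A}_i}$ for all $i\in\mathcal{G}$ (i.e. they extend to a feasible solution of the safety-constrained DC-OPF, whose objective is $\sum_{i\in\mathcal{G}}[c_{i0}(\bar p_i^2+\mathcal{A}_i^T\Omega\mathcal{A}_i)+c_{i1}\bar p_i+c_{i2}]$). Variance metric: for each line $ij$ a convex nondecreasing function $\Delta_{ij}:[0,\infty)\to[0,\infty)$, and for each flow vector $\bar f$ a set $\mathcal{F}(\bar f)\subseteq\mathcal{E}$ depending only on $\bar f$; $\Delta(\bar f,s^2)=\sum_{ij\in\mathcal{F}(\bar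 f)}\Delta_{ij}(s^2_{ij})$. Subproblems. For $\hat{\mathcal{A}}\in\mathcal{K}$ and $0<\tau<1$, $\mathrm{Reroute}(\hat{\mathcal{A}},\tau)$ is: minimize $\sum_{i\in\mathcal{G}}[c_{i0}(\bar p_i^2+\hat{\mathcal{A}}_i^T\Omega\hat{\mathcal{A}}_i)+c_{i1}\bar p_i+c_{i2}]$ over $\bar p,\bar f,\bar\theta$ subject to $B\bar\theta=\bar p+\mu-d$, $\bar f_{ij}=b_{ij}(\bar\theta_i-\bar\theta_j)$, $|\bar f_{ij}|+\nu_{ij}\sqrt{\mathbf{V}(\hat{\mathcal{A}})_{ij}}\le(1-\tau)f^{\max}_{ij}$ for all $ij\in\mathcal{E}$, and the generator constraints above with $\hat{\mathcal{A}}$. For $\bar f'$, $\mathcal{A}'$, let $\mathbf{T}(\bar f',\mathcal{A}',\tau)=\{ij\in\mathcal{E}:|\bar f'_{ij}|+\nu_{ij}\sqrt{\mathbf{V}(\mathcal{A}')_{ij}}\ge(1-\tau)f^{\max}_{ij}\}$. $\mathrm{VShift}(\bar f',\mathcal{A}',\tau)$ is: minimize $\sum_{ij\in\mathcal{F}(\bar f')}\Delta_{ij}(s_{ij}^2)$ over $s\in\mathbb{R}^m_{\ge0}$, $\mathcal{A}$ subject to $\mathcal{A}\in\mathcal{K}$, $s_{ij}^2\ge\mathbf{V}(\mathcal{A})_{ij}$ for all $ij\in\mathcal{E}$, and $|\bar f'_{ij}|+\nu_{ij}s_{ij}\le f^{\max}_{ij}$ for $ij\in\mathbf{T}(\bar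 f',\mathcal{A}',\tau)$. Variance-shifting Procedure. Input: a feasible solution $(\bar p^0,\bar f^0,\mathcal{A}_0)$ of the safety-constrained problem (so $(\bar f^0,\mathcal{A}_0)$ is compatible), the metric $\Delta$, $0<\tau<1$, and an iteration bound $N\ge1$; set $s^2_0=\mathbf{V}(\mathcal{A}_0)$. For $k=1,\dots,N$: (1) solve $\mathrm{Reroute}(\mathcal{A}_{k-1},\tau)$; if infeasible, stop; else let $(\bar p^k,\bar f^k,\bar\theta^k)$ be an optimal solution. (2) Solve $\mathrm{VShift}(\bar f^k,\mathcal{A}_{k-1},\tau)$, with optimal solution $(\hat s_k,\hat{\mathcal{A}}_k)$. (3) Choose the largest $\lambda\in(0,1]$ such that $(\bar f^k,(1-\lambda)\mathcal{A}_{k-1}+\lambda\hat{\mathcal{A}}_k)$ is compatible. (4) Set $\mathcal{A}_k=(1-\lambda)\mathcal{A}_{k-1}+\lambda\hat{\mathcal{A}}_k$ and $s^2_k=\mathbf{V}(\mathcal{A}_k)$. (5) If $\Delta(\bar f^k,s^2_k)\ge\Delta(\bar f^{k-1},s^2_{k-1})$, stop; otherwise reset $\tau\leftarrow\tau/2$ and continue. *)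

(* Defs.v *)
From HB Require Import structures.
From mathcomp Require Import all_boot all_order all_algebra.
From mathcomp Require Import reals.
Set Implicit Arguments. Unset Strict Implicit. Unset Printing Implicit Defensive.
Import Order.TTheory GRing.Theory Num.Theory.
Local Open Scope ring_scope.

(* Network data: buses are 'I_n.+1 (the last bus is ord_max, whose row/column
   is removed in hat B), lines are 'I_m, line l goes from bus [lfrom l] to
   bus [lto l]. *)
Record Net (R : realType) (n m : nat) := MkNet {
  lfrom : 'I_m -> 'I_n.+1;
  lto : 'I_m -> 'I_n.+1;
  susc : 'I_m -> R;
  fmax : 'I_m -> R;
  gen : 'I_n.+1 -> bool;
  pmin : 'I_n.+1 -> R;
  pmax : 'I_n.+1 -> R;
  c0 : 'I_n.+1 -> R;
  c1 : 'I_n.+1 -> R;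
  c2 : 'I_n.+1 -> R;
  load : 'cV[R]_n.+1;
  mu : 'cV[R]_n.+1;
  Omega : 'M[R]_n.+1;
  Kset : 'M[R]_n.+1 -> Prop;
  nu_line : 'I_m -> R;
  nu_gen : 'I_n.+1 -> R
}.

Section Defs.
Variables (R : realType) (n m : nat) (net : Net R n m).

Definition Bmat : 'M[R]_n.+1 :=
  \matrix_(i, j)
    if i == j then \sum_(l | (lfrom net l == i) || (lto net l == i)) susc net l
    else - \sum_(l | ((lfrom net l == i) && (lto net l == j))
                     || ((lfrom net l == j) && (lto net l == i))) susc net l.

Definition Bhat : 'M[R]_n :=
  \matrix_(i, j) Bmat (lift ord_max i) (lift ord_max j).

Definition Bbreve : 'M[R]_n.+1 :=
  \matrix_(i, j)
    match unlift ord_max i, unlift ord_max j with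
    | Some i', Some j' => invmx Bhat i' j'
    | _, _ => 0
    end.

Definition piv (l : 'I_m) : 'cV[R]_n.+1 :=
  (row (lfrom net l) Bbreve - row (lto net l) Bbreve)^T.

Definition Vvar (A : 'M[R]_n.+1) (l : 'I_m) : R :=
  susc net l ^+ 2 *
  ((piv l)^T *m (1%:M - A) *m Omega net *m (1%:M - A^T) *m piv l) 0 0.

Definition gvar (A : 'M[R]_n.+1) (i : 'I_n.+1) : R :=
  (row i A *m Omega net *m (row i A)^T) 0 0.

Definition cost (A : 'M[R]_n.+1) (p : 'cV[R]_n.+1) : R :=
  \sum_(i | gen net i)
     (c0 net i * (p i 0 ^+ 2 + gvar A i) + c1 net i * p i 0 + c2 net i).

Definition PowerFlow (p : 'cV[R]_n.+1) (f : 'I_m -> R) (th : 'cV[R]_n.+1) :=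
  [/\ (forall i, ~~ gen net i -> p i 0 = 0),
      Bmat *m th = p + mu net - load net &
      (forall l, f l = susc net l * (th (lfrom net l) 0 - th (lto net l) 0))].

Definition GenLimits (A : 'M[R]_n.+1) (p : 'cV[R]_n.+1) :=
  forall i, gen net i ->
    pmin net i + nu_gen net i * Num.sqrt (gvar A i) <= p i 0 /\
    p i 0 <= pmax net i - nu_gen net i * Num.sqrt (gvar A i).

Definition SafetyFeasible (p : 'cV[R]_n.+1) (f : 'I_m -> R) (th : 'cV[R]_n.+1)
    (A : 'M[R]_n.+1) :=
  [/\ Kset net A, PowerFlow p f th,
      (forall l, `|f l| + nu_line net l * Num.sqrt (Vvar A l) <= fmax net l) &
      GenLimits A p].

Definition Compatible (f : 'I_m -> R) (A : 'M[R]_n.+1) :=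
  exists p th, SafetyFeasible p f th A.

Definition RerouteFeas (Ah : 'M[R]_n.+1) (tau : R)
    (p : 'cV[R]_n.+1) (f : 'I_m -> R) (th : 'cV[R]_n.+1) :=
  [/\ PowerFlow p f th,
      (forall l, `|f l| + nu_line net l * Num.sqrt (Vvar Ah l)
                   <= (1 - tau) * fmax net l) &
      GenLimits Ah p].

Definition RerouteOpt (Ah : 'M[R]_n.+1) (tau : R)
    (p : 'cV[R]_n.+1) (f : 'I_m -> R) (th : 'cV[R]_n.+1) :=
  RerouteFeas Ah tau p f th /\
  forall p' f' th', RerouteFeas Ah tau p' f' th' -> cost Ah p <= cost Ah p'.

Definition Tset (f' : 'I_m -> R) (A' : 'M[R]_n.+1) (tau : R) (l : 'I_m) : Prop :=
  (1 - tau) * fmax net l <= `|f' l| + nu_line net l * Num.sqrt (Vvar A' l).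

Section Metric.
Variables (Dl : 'I_m -> R -> R) (Fset : ('I_m -> R) -> 'I_m -> bool).

Definition Delta (f : 'I_m -> R) (s2 : 'I_m -> R) : R :=
  \sum_(l | Fset f l) Dl l (s2 l).

Definition VShiftFeas (f' : 'I_m -> R) (A' : 'M[R]_n.+1) (tau : R)
    (s : 'I_m -> R) (A : 'M[R]_n.+1) :=
  [/\ (forall l, 0 <= s l), Kset net A,
      (forall l, Vvar A l <= s l ^+ 2) &
      (forall l, Tset f' A' tau l -> `|f' l| + nu_line net l * s l <= fmax net l)].

Definition VShiftOpt (f' : 'I_m -> R) (A' : 'M[R]_n.+1) (tau : R)
    (s : 'I_m -> R) (A : 'M[R]_n.+1) :=
  VShiftFeas f' A' tau s A /\
  forall s1 A1, VShiftFeas f' A' tau s1 A1 ->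
    Delta f' (fun l => s l ^+ 2) <= Delta f' (fun l => s1 l ^+ 2).

Definition LargestLambda (f : 'I_m -> R) (A Ah : 'M[R]_n.+1) (lam : R) :=
  [/\ 0 < lam <= 1, Compatible f ((1 - lam) *: A + lam *: Ah) &
      forall lam', 0 < lam' <= 1 ->
        Compatible f ((1 - lam') *: A + lam' *: Ah) -> lam' <= lam].

Variables (N : nat) (f0 : 'I_m -> R) (A0 : 'M[R]_n.+1) (tau0 : R).

(* [Reached k A tau fprev]: the procedure (started from (f0, A0), tau0, with
   iteration bound N) reaches the beginning of iteration k with
   A_{k-1} = A, current tau, and f^{k-1} = fprev. *)
Inductive Reached : nat -> 'M[R]_n.+1 -> R -> ('I_m -> R) -> Prop :=
| Reached_init : (1 <= N)%N -> Reached 1 A0 tau0 f0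
| Reached_step k A tau fprev p f th s Ah lam :
    Reached k A tau fprev ->
    RerouteOpt A tau p f th ->
    VShiftOpt f A tau s Ah ->
    LargestLambda f A Ah lam ->
    Delta f (Vvar ((1 - lam) *: A + lam *: Ah)) < Delta fprev (Vvar A) ->
    (k < N)%N ->
    Reached k.+1 ((1 - lam) *: A + lam *: Ah) (tau / 2) f.

End Metric.

Definition NetWF : Prop :=
  [/\ ((forall l, 0 < susc net l) /\ (forall l, 0 < fmax net l)),
      ((forall l, lfrom net l != lto net l) /\ Bhat \in unitmx),
      ((forall i, gen net i -> pmin net i <= pmax net i /\ 0 <= c0 net i) /\
       (forall l, 0 <= nu_line net l) /\ (forall i, 0 <= nu_gen net i)),
      (Omega net)^T = Omega net /\
        (forall x : 'cV[R]_n.+1, 0 <= (x^T *m Omega net *m x) 0 0) &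
      (forall A B (t : R), Kset net A -> Kset net B -> 0 <= t <= 1 ->
         Kset net ((1 - t) *: A + t *: B))].

End Defs.

Definition MetricWF (R : realType) (m : nat) (Dl : 'I_m -> R -> R) : Prop :=
  forall l,
    (forall x, 0 <= x -> 0 <= Dl l x) /\
    (forall x y, 0 <= x -> x <= y -> Dl l x <= Dl l y) /\
    (forall x y t, 0 <= x -> 0 <= y -> 0 <= t <= 1 ->
       Dl l ((1 - t) * x + t * y) <= (1 - t) * Dl l x + t * Dl l y).

(* Main.v *)
Require Import Defs.
From HB Require Import structures.
From mathcomp Require Import all_boot all_order all_algebra.
From mathcomp Require Import reals ring lra.
Import Order.TTheory GRing.Theory Num.Theory.
Set Implicit Arguments. Unset Strict Implicit.
Local Open Scope ring_scope.

Section Q.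
Variables (R : rcfType) (k : nat) (Om : 'M[R]_k).
Hypothesis Omsym : Om^T = Om.
Hypothesis Ompsd : forall x : 'cV[R]_k, 0 <= (x^T *m Om *m x) 0 0.

Definition Qf (r : 'rV[R]_k) : R := (r *m Om *m r^T) 0 0.
Definition Bf (r s : 'rV[R]_k) : R := (r *m Om *m s^T) 0 0.

Lemma Qf_ge0 r : 0 <= Qf r.
Proof. have := Ompsd r^T. by rewrite trmxK. Qed.

Lemma Bf_sym r s : Bf r s = Bf s r.
Proof.
rewrite /Bf; transitivity (((r *m Om *m s^T)^T) 0 0); first by rewrite [RHS]mxE.
by rewrite !trmx_mul trmxK Omsym mulmxA.
Qed.

Lemma Qf_comb a b r s :
  Qf (a *: r + b *: s) = a ^+ 2 * Qf r + 2 * a * b * Bf r s + b ^+ 2 * Qf s.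
Proof.
have E : Qf (a *: r + b *: s) =
   a * a * Qf r + a * b * Bf r s + b * a * Bf s r + b * b * Qf s.
  rewrite /Qf /Bf linearD /= !linearZ /= !mulmxDl !mulmxDr.
  rewrite -!scalemxAl -!scalemxAr.
  by rewrite !mxE; ring.
by rewrite E (Bf_sym s r); ring.
Qed.

Lemma Bf_CS r s : Bf r s <= Num.sqrt (Qf r) * Num.sqrt (Qf s).
Proof.
have Hr := Qf_ge0 r; have Hs := Qf_ge0 s.
set sx := Num.sqrt (Qf r); set sy := Num.sqrt (Qf s).
have Ex : sx ^+ 2 = Qf r by rewrite sqr_sqrtr.
have Ey : sy ^+ 2 = Qf s by rewrite sqr_sqrtr.
have gx : 0 <= sx by exact: sqrtr_ge0.
have gy : 0 <= sy by exact: sqrtr_ge0.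
have [Px|Zx] := boolP (0 < sx); have [Py|Zy] := boolP (0 < sy).
- have H := Qf_ge0 (sy *: r + (- sx) *: s).
  rewrite Qf_comb -Ex -Ey in H.
  set B := Bf r s in H *.
  have P : 0 < sx * sy by rewrite mulr_gt0.
  nra.
- have e : sy = 0 by rewrite -leNgt in Zy; lra.
  rewrite e mulr0.
  rewrite leNgt; apply/negP => HB.
  have H := Qf_ge0 (1 *: r + (- (Qf r + 1) / (2 * Bf s r)) *: s).
  rewrite Qf_comb -Bf_sym -Ey e in H.
  have Hn : 2 * 1 * (- (Qf r + 1) / (2 * Bf r s)) * Bf r s = - (Qf r + 1).
    by field; rewrite gt_eqF.
  lra.
- have e : sx = 0 by rewrite -leNgt in Zx; lra.
  rewrite e mul0r.
  rewrite leNgt; apply/negP => HB.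
  have H := Qf_ge0 ((- (Qf s + 1) / (2 * Bf r s)) *: r + 1 *: s).
  rewrite Qf_comb -Ex e in H.
  have Hn : 2 * (- (Qf s + 1) / (2 * Bf r s)) * 1 * Bf r s = - (Qf s + 1).
    by field; rewrite gt_eqF.
  lra.
- have e : sx = 0 by rewrite -leNgt in Zx; lra.
  rewrite e mul0r.
  rewrite leNgt; apply/negP => HB.
  have H := Qf_ge0 ((- (Qf s + 1) / (2 * Bf r s)) *: r + 1 *: s).
  rewrite Qf_comb -Ex e in H.
  have Hn : 2 * (- (Qf s + 1) / (2 * Bf r s)) * 1 * Bf r s = - (Qf s + 1).
    by field; rewrite gt_eqF.
  lra.
Qed.

Lemma Qf_convex t r s : 0 <= t <= 1 ->
  Num.sqrt (Qf ((1 - t) *: r + t *: s)) <=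
  (1 - t) * Num.sqrt (Qf r) + t * Num.sqrt (Qf s).
Proof.
move=> /andP[t0 t1].
have Hr := Qf_ge0 r; have Hs := Qf_ge0 s.
have CS := Bf_CS r s.
set sx := Num.sqrt (Qf r) in CS *; set sy := Num.sqrt (Qf s) in CS *.
have Ex : sx ^+ 2 = Qf r by rewrite sqr_sqrtr.
have Ey : sy ^+ 2 = Qf s by rewrite sqr_sqrtr.
have gx : 0 <= sx by exact: sqrtr_ge0.
have gy : 0 <= sy by exact: sqrtr_ge0.
have g : 0 <= (1 - t) * sx + t * sy by rewrite addr_ge0 // mulr_ge0 // subr_ge0.
rewrite -(ger0_norm g) -sqrtr_sqr ler_wsqrtr //.
rewrite Qf_comb -Ex -Ey.
have : 2 * (1 - t) * t * Bf r s <= 2 * (1 - t) * t * (sx * sy).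
  by rewrite ler_wpM2l // !mulr_ge0 // subr_ge0.
nra.
Qed.

End Q.

Section Main.
Variables (R : realType) (n m : nat) (net : Net R n m).

Lemma Reached_inv Dl Fset N f0 A0 tau0 k A tau fprev :
  Kset net A0 -> 0 < tau0 ->
  Reached net Dl Fset N f0 A0 tau0 k A tau fprev -> Kset net A /\ 0 < tau.
Proof.
move=> HK Ht; elim => //= k' A' tau' fp p f th s Ah lam _ [_ IH] _ _ [_ [p' [th' [HK' _ _ _]]] _] _ _.
by split => //; rewrite divr_gt0.
Qed.

Lemma Vvar_Q A l :
  Vvar net A l = susc net l ^+ 2 * Qf (Omega net) ((piv net l)^T *m (1%:M - A)).
Proof.
rewrite /Vvar /Qf; set P := piv net l.
rewrite trmx_mul trmxK [(1%:M - A)^T]linearB /= trmx1.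
by rewrite !mulmxA.
Qed.

Lemma comb1 t (A B : 'M[R]_n.+1) :
  1%:M - ((1 - t) *: A + t *: B) = (1 - t) *: (1%:M - A) + t *: (1%:M - B).
Proof. by apply/matrixP => i j; rewrite !mxE; ring. Qed.

Lemma combrow t (A B : 'M[R]_n.+1) i :
  row i ((1 - t) *: A + t *: B) = (1 - t) *: row i A + t *: row i B.
Proof. by apply/matrixP => a j; rewrite !mxE. Qed.


End Main.

Unset Implicit Arguments. Unset Strict Implicit.
Theorem lemma5 (R : realType) (n m N : nat) (net : Net R n m)
    (Dl : 'I_m -> R -> R) (Fset : ('I_m -> R) -> 'I_m -> bool)
    (p0 : 'cV[R]_n.+1) (f0 : 'I_m -> R) (th0 : 'cV[R]_n.+1) (A0 : 'M[R]_n.+1)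
    (tau0 : R)
    (k : nat) (Akm1 : 'M[R]_n.+1) (tau : R) (fprev : 'I_m -> R)
    (pk : 'cV[R]_n.+1) (fk : 'I_m -> R) (thk : 'cV[R]_n.+1)
    (fbar : 'I_m -> R) (Abar : 'M[R]_n.+1) :
  NetWF net -> MetricWF Dl ->
  0 < tau0 < 1 ->
  SafetyFeasible net p0 f0 th0 A0 ->
  Reached net Dl Fset N f0 A0 tau0 k Akm1 tau fprev ->
  RerouteOpt net Akm1 tau pk fk thk ->
  Compatible net fbar Abar ->
  exists gamma : R, 0 < gamma <= 1 /\
    forall t : R, 0 <= t <= gamma ->
      Compatible net (fun l => (1 - t) * fk l + t * fbar l)
                     ((1 - t) *: Akm1 + t *: Abar).
Proof.
move=> [[Hsusc Hfmax] _ [Hgen [Hnul Hnug]] [Osym Opsd] Hconv] _ /andP[Ht0 _]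
  [HK0 _ _ _] HR [[[Hg0 HB Hf] Hline HGL] _] [pb [thb [HKb [Hgb0 HBb Hfb] Hlineb HGLb]]].
have [HK Htau] := Reached_inv HK0 Ht0 HR.
exists 1; split; first by rewrite ltr01 lexx.
move=> t t01; have /andP[t0 t1] := t01.
have t0' : 0 <= 1 - t by rewrite subr_ge0.
exists ((1 - t) *: pk + t *: pb), ((1 - t) *: thk + t *: thb).
split.
- exact: Hconv.
- split.
  + by move=> i gi; rewrite !mxE Hg0 // Hgb0 //; ring.
  + rewrite mulmxDr -!scalemxAr HB HBb; apply/matrixP=> i j; rewrite !mxE; ring.
  + by move=> l; rewrite Hf Hfb !mxE; ring.
- move=> l.
  have Hs : Num.sqrt (Vvar net ((1 - t) *: Akm1 + t *: Abar) l) <=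
     (1 - t) * Num.sqrt (Vvar net Akm1 l) + t * Num.sqrt (Vvar net Abar l).
    rewrite Vvar_Q comb1 mulmxDr -!scalemxAr !Vvar_Q !(sqrtrM _ (sqr_ge0 (susc net l))).
    have := Qf_convex Osym Opsd ((piv net l)^T *m (1%:M - Akm1))
              ((piv net l)^T *m (1%:M - Abar)) t01.
    have := sqrtr_ge0 (susc net l ^+ 2).
    nra.
  have Hn : `|(1 - t) * fk l + t * fbar l| <= (1 - t) * `|fk l| + t * `|fbar l|.
    apply: (le_trans (ler_normD _ _)); rewrite !normrM !(ger0_norm t0, ger0_norm t0') //.
  have h0 := ler_wpM2l (Hnul l) Hs.
  have h1 := ler_wpM2l t0' (Hline l).
  have h2 := ler_wpM2l t0 (Hlineb l).
  have h3 : (1 - t) * ((1 - tau) * fmax net l) <= (1 - t) * fmax net l.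
    by rewrite ler_wpM2l // ger_pMl ?Hfmax //; lra.
  apply: (le_trans (lerD Hn h0)).
  set a := `|fk l|; set b := `|fbar l|.
  set sk := Num.sqrt (Vvar net Akm1 l); set sb := Num.sqrt (Vvar net Abar l).
  have -> : (1 - t) * a + t * b + nu_line net l * ((1 - t) * sk + t * sb)
     = (1 - t) * (a + nu_line net l * sk) + t * (b + nu_line net l * sb) by ring.
  apply: (le_trans (lerD h1 h2)).
  apply: (le_trans (lerD h3 (lexx _))).
  by rewrite -mulrDl subrK mul1r.
- move=> i gi.
  have Hs : Num.sqrt (gvar net ((1 - t) *: Akm1 + t *: Abar) i) <=
     (1 - t) * Num.sqrt (gvar net Akm1 i) + t * Num.sqrt (gvar net Abar i).
    rewrite /gvar combrow.
    exact: (Qf_convex Osym Opsd (row i Akm1) (row i Abar) t01).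
  have h0 := ler_wpM2l (Hnug i) Hs.
  have [a1 a2] := HGL i gi.
  have [b1 b2] := HGLb i gi.
  have h1 := ler_wpM2l t0' a1.
  have h2 := ler_wpM2l t0 b1.
  have h3 := ler_wpM2l t0' a2.
  have h4 := ler_wpM2l t0 b2.
  rewrite !mxE; split; nra.
Qed.
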